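(* Let $I$ be an index set and $P_r,Q_r\in GL(n,\mathbb C)$ for $r\in I$. There exists a ($C^1$-)diffeomorphism $f\colon\mathbb C^n\to\mathbb C^n$ (of the underlying real space $\mathbb R^{2n}$) with $f(P_rw)=Q_rf(w)$ for all $w\in\mathbb C^n$, $r\in I$, if and only if there exists an invertible $\mathbb R$-linear map $L\colon\mathbb C^n\to\mathbb C^n$, $L(w)=Mw+N\overline w$ with $M,N$ complex $n\times n$ matrices, such that $L(P_rw)=Q_rL(w)$ for all $w\in\mathbb C^n$, $r\in I$. *)

(* Defs.v *)
From mathcomp Require Import all_boot.
From Stdlib Require Import Reals.

Set Implicit Arguments.
Unset Strict Implicit.
Unset Printing Implicit Defensive.

Local Open Scope R_scope.

Record cpx := Cx { cre : R ; cim : R }.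

Definition c0 : cpx := Cx 0 0.
Definition c1 : cpx := Cx 1 0.
Definition cadd (a b : cpx) : cpx := Cx (cre a + cre b) (cim a + cim b).
Definition copp (a : cpx) : cpx := Cx (- cre a) (- cim a).
Definition cmul (a b : cpx) : cpx :=
  Cx (cre a * cre b - cim a * cim b) (cre a * cim b + cim a * cre b).
Definition cconj (a : cpx) : cpx := Cx (cre a) (- cim a).
Definition cscale (t : R) (a : cpx) : cpx := Cx (t * cre a) (t * cim a).
Definition cnorm2 (a : cpx) : R := cre a * cre a + cim a * cim a.

Definition cvec (n : nat) := 'I_n -> cpx.
Definition cmat (n : nat) := 'I_n -> 'I_n -> cpx.

Definition vadd n (v w : cvec n) : cvec n := fun i => cadd (v i) (w i).
Definition vsub n (v w : cvec n) : cvec n := fun i => cadd (v i) (copp (w i)).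
Definition vscale n (t : R) (v : cvec n) : cvec n := fun i => cscale t (v i).
Definition vconj n (v : cvec n) : cvec n := fun i => cconj (v i).

Definition vnorm n (v : cvec n) : R := sqrt (\big[Rplus/0]_(i < n) cnorm2 (v i)).

Definition mulmv n (M : cmat n) (w : cvec n) : cvec n :=
  fun i => \big[cadd/c0]_(j < n) cmul (M i j) (w j).
Definition mulmm n (A B : cmat n) : cmat n :=
  fun i k => \big[cadd/c0]_(j < n) cmul (A i j) (B j k).
Definition idm n : cmat n := fun i j => if i == j then c1 else c0.

Definition in_GL n (A : cmat n) : Prop :=
  exists B : cmat n, mulmm A B = @idm n /\ mulmm B A = @idm n.

Definition Rlinear n (T : cvec n -> cvec n) : Prop :=
  (forall v w, T (vadd v w) = vadd (T v) (T w)) /\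
  (forall (t : R) v, T (vscale t v) = vscale t (T v)).

Definition has_derivative n (f : cvec n -> cvec n) (Df : cvec n -> cvec n -> cvec n) :=
  forall x, Rlinear (Df x) /\
    forall eps, 0 < eps -> exists delta, 0 < delta /\
      forall h, vnorm h < delta ->
        vnorm (vsub (vsub (f (vadd x h)) (f x)) (Df x h)) <= eps * vnorm h.

Definition continuous_derivative n (Df : cvec n -> cvec n -> cvec n) :=
  forall x eps, 0 < eps -> exists delta, 0 < delta /\
    forall y, vnorm (vsub y x) < delta ->
      forall h, vnorm (vsub (Df y h) (Df x h)) <= eps * vnorm h.

Definition C1 n (f : cvec n -> cvec n) : Prop :=
  exists Df, has_derivative f Df /\ continuous_derivative Df.

Definition C1_diffeo n (f : cvec n -> cvec n) : Prop :=
  exists g : cvec n -> cvec n,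
    (forall w, g (f w) = w) /\ (forall w, f (g w) = w) /\ C1 f /\ C1 g.

Definition MNmap n (M N : cmat n) (w : cvec n) : cvec n :=
  vadd (mulmv M w) (mulmv N (vconj w)).

(* invertibility of a map (for the R-linear maps above, this is invertibility
   as an R-linear map, since the inverse of a linear bijection is linear) *)
Definition invertible_map n (L : cvec n -> cvec n) : Prop :=
  exists G : cvec n -> cvec n, (forall w, G (L w) = w) /\ (forall w, L (G w) = w).

(* Main.v *)
Require Import Defs.
From mathcomp Require Import all_boot.
From Stdlib Require Import Reals.
From Stdlib Require Import Lra Psatz FunctionalExtensionality.
From HB Require Import structures.
Set Implicit Arguments.
Unset Strict Implicit.
Local Open Scope R_scope.
Set Warnings "-redundant-canonical-projection -notation-overridden".

Lemma cx_eq (a b : cpx) : cre a = cre b -> cim a = cim b -> a = b.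
Proof. destruct a, b; simpl; intros; subst; reflexivity. Qed.

Lemma caddA : associative cadd.
Proof. intros a b c; apply cx_eq; simpl; ring. Qed.
Lemma caddC : commutative cadd.
Proof. intros a b; apply cx_eq; simpl; ring. Qed.
Lemma cadd0 : left_id c0 cadd.
Proof. intros a; apply cx_eq; simpl; ring. Qed.

Lemma RplusA : associative Rplus. Proof. intros a b c; ring. Qed.
HB.instance Definition _ := Monoid.isComLaw.Build R 0 Rplus RplusA Rplus_comm Rplus_0_l.
HB.instance Definition _ := Monoid.isComLaw.Build cpx c0 cadd caddA caddC cadd0.

Definition vzero n : cvec n := fun _ => c0.

Lemma vaddA n : associative (@vadd n).
Proof. intros a b c; apply functional_extensionality => i; apply caddA. Qed.
Lemma vaddC n : commutative (@vadd n).
Proof. intros a b; apply functional_extensionality => i; apply caddC. Qed.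
Lemma vadd0 n : left_id (@vzero n) (@vadd n).
Proof. intros a; apply functional_extensionality => i; apply cadd0. Qed.
HB.instance Definition _ n := Monoid.isComLaw.Build (cvec n) (@vzero n) (@vadd n) (@vaddA n) (@vaddC n) (@vadd0 n).

Lemma vsum_comp n (I : finType) (F : I -> cvec n) i :
  (\big[@vadd n/@vzero n]_j F j) i = \big[cadd/c0]_j F j i.
Proof. by apply: (big_morph (fun v : cvec n => v i)). Qed.

Definition N1 n (v : cvec n) : R := \big[Rplus/0]_(i < n) (Rabs (cre (v i)) + Rabs (cim (v i))).

Lemma sum_le (I : finType) (F G : I -> R) : (forall i, F i <= G i) ->
  \big[Rplus/0]_i F i <= \big[Rplus/0]_i G i.
Proof. intros H. apply (big_ind2 (fun a b => a <= b)); [lra|intros; lra|auto]. Qed.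

Lemma sum_ge0 (I : finType) (F : I -> R) : (forall i, 0 <= F i) ->
  0 <= \big[Rplus/0]_i F i.
Proof. intros H. apply (big_ind (fun a => 0 <= a)); [lra|intros; lra|auto]. Qed.

Lemma sum_mull (I : finType) (F : I -> R) c :
  \big[Rplus/0]_i (c * F i) = c * \big[Rplus/0]_i F i.
Proof. apply (big_ind2 (fun a b => a = c * b)); [ring|intros; subst; ring|auto]. Qed.

Lemma sum_ge_term (I : finType) (F : I -> R) j : (forall i, 0 <= F i) ->
  F j <= \big[Rplus/0]_i F i.
Proof. intros H. rewrite (bigD1 j) //=.
 have : 0 <= \big[Rplus/0]_(i | i != j) F i by apply (big_ind (fun a => 0 <= a)); [lra|intros; lra|auto].
 lra. Qed.

Lemma N1_ge0 n (v : cvec n) : 0 <= N1 v.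
Proof. apply sum_ge0 => i. have := Rabs_pos (cre (v i)); have := Rabs_pos (cim (v i)); lra. Qed.

Lemma N1_comp n (v : cvec n) i : Rabs (cre (v i)) + Rabs (cim (v i)) <= N1 v.
Proof. apply (@sum_ge_term _ (fun i => Rabs (cre (v i)) + Rabs (cim (v i)))) => j.
 have := Rabs_pos (cre (v j)); have := Rabs_pos (cim (v j)); lra. Qed.

Lemma N1_le n (a b c : cvec n) :
  (forall i, Rabs (cre (a i)) <= Rabs (cre (b i)) + Rabs (cre (c i))) ->
  (forall i, Rabs (cim (a i)) <= Rabs (cim (b i)) + Rabs (cim (c i))) ->
  N1 a <= N1 b + N1 c.
Proof. intros H1 H2. rewrite /N1 -big_split /=. apply sum_le => i.
 have := H1 i; have := H2 i; lra. Qed.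

Lemma N1_tri n (a b c : cvec n) : (forall i, a i = cadd (b i) (c i)) -> N1 a <= N1 b + N1 c.
Proof. intros H; apply N1_le => i; rewrite H /=; apply Rabs_triang. Qed.

Lemma N1_scale n t (v : cvec n) : N1 (vscale t v) = Rabs t * N1 v.
Proof. rewrite /N1 -sum_mull. apply eq_bigr => i _ /=. rewrite !Rabs_mult; ring. Qed.

Lemma abs_le0 x : Rabs x <= 0 -> x = 0.
Proof. unfold Rabs; destruct (Rcase_abs x); lra. Qed.

Lemma N1_zero n (v : cvec n) : N1 v <= 0 -> v = @vzero n.
Proof. intros H. apply functional_extensionality => i. have := N1_comp v i.
 have := Rabs_pos (cre (v i)); have := Rabs_pos (cim (v i)). intros.
 apply cx_eq; simpl; apply abs_le0; lra. Qed.

Lemma vnorm_le_N1 n (v : cvec n) : vnorm v <= N1 v.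
Proof.
 rewrite /vnorm. apply Rsqr_incr_0_var; [|apply N1_ge0]. rewrite Rsqr_sqrt; last first.
 { apply sum_ge0 => i. rewrite /cnorm2; nra. }
 rewrite /Rsqr /N1.
 apply (big_ind2 (fun a b => 0 <= b /\ a <= b * b)) ; [lra| |].
 - intros x1 x2 y1 y2 [? ?] [? ?]. split; nra.
 - intros i _. rewrite /cnorm2. have := Rabs_pos (cre (v i)); have := Rabs_pos (cim (v i)).
   have := Rsqr_abs (cre (v i)); have := Rsqr_abs (cim (v i)). rewrite /Rsqr. intros; split; nra.
Qed.

Lemma comp_le_vnorm n (v : cvec n) i : Rabs (cre (v i)) <= vnorm v /\ Rabs (cim (v i)) <= vnorm v.
Proof.
 have H0 : 0 <= \big[Rplus/0]_(i < n) cnorm2 (v i) by apply sum_ge0 => j; rewrite /cnorm2; nra.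
 have H := @sum_ge_term _ (fun i => cnorm2 (v i)) i.
 have Hc : cnorm2 (v i) <= \big[Rplus/0]_(i < n) cnorm2 (v i) by apply H => j; rewrite /cnorm2; nra.
 have Ec : cnorm2 (v i) = cre (v i) * cre (v i) + cim (v i) * cim (v i) by [].
 rewrite /vnorm. split.
 - rewrite -(sqrt_Rsqr (Rabs _)); [|apply Rabs_pos]. apply sqrt_le_1_alt. rewrite -Rsqr_abs /Rsqr.
   have := Rle_0_sqr (cim (v i)); rewrite /Rsqr. lra.
 - rewrite -(sqrt_Rsqr (Rabs _)); [|apply Rabs_pos]. apply sqrt_le_1_alt. rewrite -Rsqr_abs /Rsqr.
   have := Rle_0_sqr (cre (v i)); rewrite /Rsqr. lra.
Qed.

Lemma sum_const n c : \big[Rplus/0]_(i < n) c = INR n * c.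
Proof. elim: n => [|k IH]. rewrite big_ord0 /=; ring. rewrite big_ord_recr /= IH. case: k {IH} => [|k] /=; ring. Qed.

Lemma N1_le_vnorm n (v : cvec n) : N1 v <= 2 * INR n * vnorm v.
Proof.
 have -> : 2 * INR n * vnorm v = \big[Rplus/0]_(i < n) (2 * vnorm v) by rewrite sum_const; ring.
 apply sum_le => i. have := comp_le_vnorm v i; lra.
Qed.

Lemma vsub_scale n (a b : cvec n) : vsub a b = vadd a (vscale (-1) b).
Proof. apply functional_extensionality => i; apply cx_eq; simpl; ring. Qed.

Section Lin.
Variables (n : nat) (T : cvec n -> cvec n) (HT : Rlinear T).

Lemma lin_add v w : T (vadd v w) = vadd (T v) (T w).
Proof. apply HT. Qed.
Lemma lin_scale t v : T (vscale t v) = vscale t (T v).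
Proof. apply HT. Qed.
Lemma lin_zero : T (@vzero n) = @vzero n.
Proof.
 have -> : @vzero n = vscale 0 (@vzero n) by apply functional_extensionality => i; apply cx_eq; simpl; ring.
 rewrite lin_scale. apply functional_extensionality => i; apply cx_eq; simpl; ring.
Qed.
Lemma lin_sub v w : T (vsub v w) = vsub (T v) (T w).
Proof. by rewrite !vsub_scale lin_add lin_scale. Qed.
Lemma lin_sum (F : 'I_n -> cvec n) :
  T (\big[@vadd n/@vzero n]_j F j) = \big[@vadd n/@vzero n]_j T (F j).
Proof. apply: big_morph. exact lin_add. exact lin_zero. Qed.
End Lin.

Definition ej n (j : 'I_n) : cvec n := fun i => if i == j then Defs.c1 else Defs.c0.
Definition iej n (j : 'I_n) : cvec n := fun i => if i == j then Cx 0 1 else Defs.c0.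

Lemma decomp n (v : cvec n) :
  v = \big[@vadd n/@vzero n]_j vadd (vscale (cre (v j)) (ej j)) (vscale (cim (v j)) (iej j)).
Proof.
 apply functional_extensionality => i. rewrite vsum_comp (bigD1 i) //= big1.
 - rewrite /vadd /vscale /ej /iej eqxx. apply cx_eq; simpl; ring.
 - move=> j /negbTE Hj. rewrite /ej /iej /vadd /vscale eq_sym Hj. apply cx_eq; simpl; ring.
Qed.

Lemma N1_add n (a b : cvec n) : N1 (vadd a b) <= N1 a + N1 b.
Proof. by apply N1_tri. Qed.

Lemma N1_vzero n : N1 (@vzero n) = 0.
Proof. rewrite /N1 big1 // => i _ /=. rewrite Rabs_R0; ring. Qed.

Lemma N1_sum n (F : 'I_n -> cvec n) :
  N1 (\big[@vadd n/@vzero n]_j F j) <= \big[Rplus/0]_j N1 (F j).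
Proof.
 apply (big_ind2 (fun v r => N1 v <= r)).
 - rewrite N1_vzero; lra.
 - intros. have := N1_add x1 y1. lra.
 - intros; lra.
Qed.

Lemma lin_bound n (T : cvec n -> cvec n) : Rlinear T ->
  exists C, 0 <= C /\ forall v, N1 (T v) <= C * N1 v.
Proof.
 intros HT. exists (\big[Rplus/0]_(j < n) (N1 (T (ej j)) + N1 (T (iej j)))). split.
 { apply sum_ge0 => j. have := N1_ge0 (T (ej j)); have := N1_ge0 (T (iej j)); lra. }
 intros v. rewrite {1}(decomp v) (lin_sum HT) Rmult_comm -sum_mull.
 eapply Rle_trans; [apply N1_sum|]. apply sum_le => j.
 rewrite (lin_add HT) !(lin_scale HT). eapply Rle_trans; [apply N1_add|]. rewrite !N1_scale.
 have := N1_comp v j. have := Rabs_pos (cre (v j)); have := Rabs_pos (cim (v j)).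
 have := N1_ge0 (T (ej j)); have := N1_ge0 (T (iej j)). nra.
Qed.


Lemma mulmv_lin n (P : cmat n) : Rlinear (mulmv P).
Proof.
 split.
 - intros v w; apply functional_extensionality => i. rewrite /mulmv /vadd -big_split /=.
   apply eq_bigr => j _. apply cx_eq; simpl; ring.
 - intros t v; apply functional_extensionality => i. rewrite /mulmv /vscale.
   rewrite (big_morph (cscale t) (id1 := Defs.c0) (op1 := cadd)).
   + apply eq_bigr => j _. apply cx_eq; simpl; ring.
   + intros a b; apply cx_eq; simpl; ring.
   + apply cx_eq; simpl; ring.
Qed.

Lemma MNmap_lin n (M N : cmat n) : Rlinear (MNmap M N).
Proof.
 have [A1 A2] := mulmv_lin M. have [B1 B2] := mulmv_lin N. split.
 - intros v w. rewrite /MNmap A1.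
   have -> : vconj (vadd v w) = vadd (vconj v) (vconj w) by apply functional_extensionality => i; apply cx_eq; simpl; ring.
   rewrite B1. apply functional_extensionality => i; apply cx_eq; simpl; ring.
 - intros t v. rewrite /MNmap A2.
   have -> : vconj (vscale t v) = vscale t (vconj v) by apply functional_extensionality => i; apply cx_eq; simpl; ring.
   rewrite B2. apply functional_extensionality => i; apply cx_eq; simpl; ring.
Qed.

Lemma lin_repr n (T : cvec n -> cvec n) : Rlinear T ->
  exists M N : cmat n, forall w, MNmap M N w = T w.
Proof.
 intros HT.
 exists (fun i j => cscale (/2) (cadd (T (ej j) i) (cmul (Cx 0 (-1)) (T (iej j) i)))).
 exists (fun i j => cscale (/2) (cadd (T (ej j) i) (cmul (Cx 0 1) (T (iej j) i)))).
 intros w. rewrite {2}(decomp w) (lin_sum HT). apply functional_extensionality => i.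
 rewrite vsum_comp /MNmap /vadd /mulmv -big_split /=. apply eq_bigr => j _.
 rewrite (lin_add HT) !(lin_scale HT). rewrite /vadd /vscale /vconj.
 apply cx_eq; simpl; field.
Qed.

Definition small n (phi T : cvec n -> cvec n) := forall eps, 0 < eps -> exists delta, 0 < delta /\
  forall h, N1 h < delta -> N1 (vsub (phi h) (T h)) <= eps * N1 h.

Definition deriv1 n (f : cvec n -> cvec n) (A : cvec n -> cvec n) x :=
  small (fun h => vsub (f (vadd x h)) (f x)) A.

Lemma vnorm_ge0 n (v : cvec n) : 0 <= vnorm v.
Proof. apply sqrt_pos. Qed.

Lemma hasder_N1 n (f : cvec n -> cvec n) Df : has_derivative f Df ->
  forall x, Rlinear (Df x) /\ deriv1 f (Df x) x.
Proof.
 intros H x. have [HL Hd] := H x. split; first done.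
 intros eps Heps. have HK : 0 < 2 * INR n + 1 by have := pos_INR n; lra.
 have [delta [Hdel Hh]] := Hd (eps / (2 * INR n + 1)) (Rdiv_lt_0_compat _ _ Heps HK).
 exists delta; split; first done. intros h Hnh.
 have H1 := vnorm_le_N1 h. have := Hh h ltac:(lra). intros H2.
 set r := vsub _ _ in H2 *. have H3 := N1_le_vnorm r. have := vnorm_ge0 r; have := vnorm_ge0 h.
 have := pos_INR n. intros.
 have K4 : 2 * INR n * vnorm r <= 2 * INR n * (eps / (2 * INR n + 1) * vnorm h) by apply Rmult_le_compat_l; lra.
 have K5 : 2 * INR n * (eps / (2 * INR n + 1) * vnorm h) <= eps * vnorm h.
 { have -> : 2 * INR n * (eps / (2 * INR n + 1) * vnorm h) = (2 * INR n / (2 * INR n + 1)) * (eps * vnorm h) by field; lra.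
   have : 2 * INR n / (2 * INR n + 1) <= 1. { apply (Rmult_le_reg_r (2 * INR n + 1)); [lra|]. rewrite Rmult_1_l /Rdiv Rmult_assoc Rinv_l; lra. }
   have : 0 <= eps * vnorm h by nra. nra. }
 nra.
Qed.

Lemma abs3 a b c : Rabs (a - b) <= Rabs (c - b) + Rabs (c - a).
Proof. unfold Rabs; repeat destruct Rcase_abs; lra. Qed.

Lemma N1_sub3 n (a b c : cvec n) : N1 (vsub a b) <= N1 (vsub c b) + N1 (vsub c a).
Proof. apply N1_le => i /=; apply abs3. Qed.

Lemma uniq_small n (phi T1 T2 : cvec n -> cvec n) : Rlinear T1 -> Rlinear T2 ->
  small phi T1 -> small phi T2 -> forall h, T1 h = T2 h.
Proof.
 intros L1 L2 S1 S2 h. set d := vsub (T1 h) (T2 h).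
 suff Hd : N1 d <= 0.
 { have Hz := N1_zero Hd. apply functional_extensionality => i.
   have := f_equal (fun v => v i) Hz. rewrite /d /vsub /vzero => E. apply cx_eq.
   - have := f_equal cre E. simpl. lra.
   - have := f_equal cim E. simpl. lra. }
 apply Rnot_lt_le => Hpos.
 have Hh : 0 < N1 h.
 { have := N1_ge0 h. intros H0. destruct (Rle_lt_or_eq_dec _ _ H0) as [|E]; first done.
   exfalso. have Hz := N1_zero (Req_le _ _ (esym E)). rewrite /d Hz (lin_zero L1) (lin_zero L2) in Hpos.
   have : N1 (vsub (@vzero n) (@vzero n)) = 0.
   { have -> : vsub (@vzero n) (@vzero n) = @vzero n by apply functional_extensionality => i; apply cx_eq; simpl; ring.
     apply N1_vzero. }
   lra. }
 set eps := N1 d / (4 * N1 h).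
 have Heps : 0 < eps by apply Rdiv_lt_0_compat; lra.
 have [d1 [Hd1 H1]] := S1 eps Heps. have [d2 [Hd2 H2]] := S2 eps Heps.
 set del := Rmin d1 d2. have Hdel : 0 < del by apply Rmin_pos.
 set t := del / (2 * N1 h). have Ht : 0 < t by apply Rdiv_lt_0_compat; lra.
 set h' := vscale t h.
 have Nh' : N1 h' = t * N1 h by rewrite /h' N1_scale Rabs_pos_eq; lra.
 have Nh'2 : N1 h' = del / 2 by rewrite Nh' /t; field; lra.
 have := Rmin_l d1 d2; have := Rmin_r d1 d2. fold del. intros.
 have E1 := H1 h' ltac:(lra). have E2 := H2 h' ltac:(lra).
 have E3 := N1_sub3 (T1 h') (T2 h') (phi h').
 have : vsub (T1 h') (T2 h') = vscale t d.
 { rewrite /h' (lin_scale L1) (lin_scale L2) /d. apply functional_extensionality => i; apply cx_eq; simpl; ring. }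
 intros E. rewrite E N1_scale Rabs_pos_eq in E3; last lra.
 rewrite Nh' in E1 E2.
 have : t * N1 d <= 2 * eps * t * N1 h by lra.
 have -> : 2 * eps * t * N1 h = t * N1 d / 2 by rewrite /eps; field; lra.
 nra.
Qed.

Lemma lin_id n : Rlinear (fun v : cvec n => v).
Proof. done. Qed.

Lemma lin_comp n (S T : cvec n -> cvec n) : Rlinear S -> Rlinear T -> Rlinear (fun v => S (T v)).
Proof. intros HS HT. split; intros; by rewrite (lin_add HT) (lin_add HS) || by rewrite (lin_scale HT) (lin_scale HS). Qed.

Lemma vsub_self n (v : cvec n) : vsub v v = @vzero n.
Proof. apply functional_extensionality => i; apply cx_eq; simpl; ring. Qed.

Lemma small_id n : small (fun h : cvec n => h) (fun h => h).
Proof. intros eps He. exists 1; split; [lra|]. intros h _. rewrite vsub_self N1_vzero.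
 have := N1_ge0 h; nra. Qed.

Lemma vadd_sub n (y z : cvec n) : vadd y (vsub z y) = z.
Proof. apply functional_extensionality => i; apply cx_eq; simpl; ring. Qed.

Lemma chain n (f g A B : cvec n -> cvec n) x : (forall w, g (f w) = w) ->
  Rlinear A -> Rlinear B -> deriv1 f A x -> deriv1 g B (f x) -> forall h, B (A h) = h.
Proof.
 intros gf LA LB DA DB.
 apply (uniq_small (phi := fun h => h)); [apply lin_comp; auto|apply lin_id| |apply small_id].
 have [CA [CA0 HA]] := lin_bound LA. have [CB [CB0 HB]] := lin_bound LB.
 intros eps He.
 set e2 := Rmin 1 (eps / (2 * (CB + 1))).
 have He2 : 0 < e2 by apply Rmin_pos; [lra|apply Rdiv_lt_0_compat; lra].
 set e1 := eps / (2 * (CA + 1)).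
 have He1 : 0 < e1 by apply Rdiv_lt_0_compat; lra.
 have [df [Hdf Hf]] := DA e2 He2. have [dg [Hdg Hg]] := DB e1 He1.
 exists (Rmin df (dg / (CA + 1))). split.
 { apply Rmin_pos; [lra|apply Rdiv_lt_0_compat; lra]. }
 intros h Hh. have := Rmin_l df (dg / (CA + 1)); have := Rmin_r df (dg / (CA + 1)). intros Hm1 Hm2.
 set k := vsub (f (vadd x h)) (f x).
 have Rf := Hf h ltac:(lra). fold k in Rf.
 have Nk : N1 k <= (CA + 1) * N1 h.
 { have := N1_tri (a := k) (b := A h) (c := vsub k (A h)) ltac:(intros i; apply cx_eq; simpl; ring).
   have := HA h. have := Rmin_l 1 (eps / (2 * (CB + 1))). fold e2. have := N1_ge0 h. nra. }
 have Nk2 : N1 k < dg.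
 { have := N1_ge0 h. intros. have : (CA + 1) * N1 h < dg.
   { have : N1 h < dg / (CA + 1) by lra. intros Hx.
     have -> : dg = (CA + 1) * (dg / (CA + 1)) by field; lra. apply Rmult_lt_compat_l; lra. }
   lra. }
 have Rg := Hg k Nk2. rewrite vadd_sub !gf in Rg.
 have HBr := HB (vsub k (A h)).
 rewrite -> (lin_sub LB) in HBr.
 have T := N1_tri (a := vsub h (B (A h))) (b := vsub (vsub (vadd x h) x) (B k)) (c := vsub (B k) (B (A h)))
   ltac:(intros i; apply cx_eq; simpl; ring).
 have := N1_ge0 h; have := N1_ge0 k; intros.
 have X1 : e1 * N1 k <= eps / 2 * N1 h.
 { have -> : eps / 2 * N1 h = e1 * ((CA + 1) * N1 h) by rewrite /e1; field; lra.
   apply Rmult_le_compat_l; lra. }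
 have X2 : CB * N1 (vsub k (A h)) <= eps / 2 * N1 h.
 { have Y : CB * N1 (vsub k (A h)) <= CB * (e2 * N1 h) by apply Rmult_le_compat_l.
   have := Rmin_r 1 (eps / (2 * (CB + 1))). fold e2. intros Z.
   have : CB * e2 <= eps / 2.
   { have : CB * e2 <= (CB + 1) * (eps / (2 * (CB + 1))) by apply Rmult_le_compat; lra.
     have -> : (CB + 1) * (eps / (2 * (CB + 1))) = eps / 2 by field; lra. lra. }
   intros. nra. }
 lra.
Qed.

Lemma conj_lemma n (f A : cvec n -> cvec n) (P Q : cmat n) :
  (forall w, f (mulmv P w) = mulmv Q (f w)) -> Rlinear A -> deriv1 f A (@vzero n) ->
  forall h, A (mulmv P h) = mulmv Q (A h).
Proof.
 intros Hfe LA DA.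
 have LP := mulmv_lin P. have LQ := mulmv_lin Q.
 have [CP [CP0 HP]] := lin_bound LP. have [CQ [CQ0 HQ]] := lin_bound LQ.
 apply (uniq_small (phi := fun h => vsub (f (mulmv P h)) (f (@vzero n)))).
 - by apply lin_comp.
 - by apply lin_comp.
 - intros eps He. have He' : 0 < eps / (CP + 1) by apply Rdiv_lt_0_compat; lra.
   have [d [Hd Hf]] := DA _ He'. exists (d / (CP + 1)). split; first (apply Rdiv_lt_0_compat; lra).
   intros h Hh. have := HP h. have := N1_ge0 h. intros.
   have Hl : N1 (mulmv P h) < d.
   { have : CP * N1 h <= (CP + 1) * N1 h by nra.
     have : (CP + 1) * N1 h < d. { have -> : d = (CP + 1) * (d / (CP + 1)) by field; lra.
       apply Rmult_lt_compat_l; lra. } lra. }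
   have := Hf _ Hl. rewrite (vadd0 (mulmv P h)) => X.
   have -> : eps * N1 h = eps / (CP + 1) * ((CP + 1) * N1 h) by field; lra.
   eapply Rle_trans; [apply X|]. apply Rmult_le_compat_l; lra.
 - intros eps He. have He' : 0 < eps / (CQ + 1) by apply Rdiv_lt_0_compat; lra.
   have [d [Hd Hf]] := DA _ He'. exists d. split; first done.
   intros h Hh. have X := Hf h Hh. rewrite (vadd0 h) in X.
   have E0 : f (@vzero n) = mulmv Q (f (@vzero n)).
   { rewrite -Hfe. by rewrite (lin_zero LP). }
   rewrite Hfe. rewrite E0 -(lin_sub LQ) -(lin_sub LQ).
   eapply Rle_trans; [apply HQ|]. have := N1_ge0 h; intros.
   have : CQ * (eps / (CQ + 1)) <= eps.
   { have -> : CQ * (eps / (CQ + 1)) = eps * (CQ / (CQ + 1)) by field; lra.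
     have : CQ / (CQ + 1) <= 1. { apply (Rmult_le_reg_r (CQ + 1)); [lra|]. rewrite Rmult_1_l /Rdiv Rmult_assoc Rinv_l; lra. }
     nra. }
   intros. have := N1_ge0 (vsub (vsub (f h) (f (@vzero n))) (A h)). nra.
Qed.

Lemma vnorm_zero n : vnorm (@vzero n) = 0.
Proof. rewrite /vnorm big1 ?sqrt_0 // => i _. rewrite /cnorm2 /=; ring. Qed.

Lemma lin_C1 n (T : cvec n -> cvec n) : Rlinear T -> Defs.C1 T.
Proof.
 intros HT. exists (fun (_ : cvec n) => T). split.
 - intros x. split; first done. intros eps He. exists 1. split; first lra. intros h _.
   rewrite (lin_add HT).
   have -> : vsub (vsub (vadd (T x) (T h)) (T x)) (T h) = @vzero n
     by apply functional_extensionality => i; apply cx_eq; simpl; ring.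
   rewrite vnorm_zero. have := vnorm_ge0 h; nra.
 - intros x eps He. exists 1. split; first lra. intros y _ h. rewrite vsub_self vnorm_zero.
   have := vnorm_ge0 h; nra.
Qed.

Lemma inv_lin n (T G : cvec n -> cvec n) : Rlinear T ->
  (forall w, G (T w) = w) -> (forall w, T (G w) = w) -> Rlinear G.
Proof.
 intros HT GT TG. split.
 - intros v w. rewrite -{1}(TG v) -{1}(TG w) -(lin_add HT). apply GT.
 - intros t v. rewrite -{1}(TG v) -(lin_scale HT). apply GT.
Qed.

Theorem theorem3p4 (n : nat) (I : Type) (P Q : I -> cmat n)
  (hP : forall r, in_GL (P r)) (hQ : forall r, in_GL (Q r)) :
  (exists f : cvec n -> cvec n, C1_diffeo f /\
     forall r w, f (mulmv (P r) w) = mulmv (Q r) (f w))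
  <->
  (exists M N : cmat n, invertible_map (MNmap M N) /\
     forall r w, MNmap M N (mulmv (P r) w) = mulmv (Q r) (MNmap M N w)).
Proof.
 split.
 - intros [f [[g [gf [fg [[Df [Hf _]] [Dg [Hg _]]]]]] Heq]].
   have [LA DA] := hasder_N1 Hf (@vzero n).
   have [LB DB] := hasder_N1 Hg (f (@vzero n)).
   have BA := chain gf LA LB DA DB.
   have [LA' DA'] := hasder_N1 Hf (g (f (@vzero n))).
   have AB := chain fg LB LA' DB DA'. rewrite gf in AB.
   have [M [N HMN]] := lin_repr LA.
   exists M, N. split.
   + exists (Dg (f (@vzero n))). split; intros w; rewrite HMN; auto.
   + intros r w. rewrite !HMN. apply (conj_lemma (Heq r) LA DA).
 - intros [M [N [[G [GL LG]] Heq]]].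
   have HL := MNmap_lin M N. have HG := inv_lin HL GL LG.
   exists (MNmap M N). split; last done.
   exists G. split; first done. split; first done. split; apply lin_C1; done.
Qed.
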